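(* Let $(G,q)$ be a pointed graph and $k\ge 0$ an integer. (1) For every oriented $k$-spanning tree $\mathcal T$ of $(G,q)$, the divisor $D_{\mathcal T}$ is $q$-reduced. (2) For every $q$-reduced divisor $D$ with $D(q)=-1$ and $\deg(D)=k-1$, there exists an oriented $k$-spanning tree $\mathcal T$ of $(G,q)$ with $D_{\mathcal T}\sim D$.
   Context: $G$ is a finite connected multigraph without loops with $n$ vertices, $q\in V(G)$. $\mathbb E(G)$ is the set of oriented edges (each edge gives two opposite oriented edges $e,\bar e$, with head $e_+$ and tail $e_-$). For a set $\mathcal P\subseteq\mathbb E(G)$, $\mathrm{indeg}_{\mathcal P}(v)=|\{e\in\mathcal P:e_+=v\}|$ and $D_{\mathcal P}=\sum_v(\mathrm{indeg}_{\mathcal P}(v)-1)(v)$. An oriented $k$-spanning tree of $(G,q)$ is a subset $\mathcal T\subseteq\mathbb E(G)$ with $|\mathcal T|=n-1+k$ such that the directed graph $(V(G),\mathcal T)$ has no directed cycle, $\mathrm{indeg}_{\mathcal T}(q)=0$, and $\mathrm{indeg}_{\mathcal T}(v)\ge1$ for all $v\neq q$ (so $q$ is its unique source). A divisor is an integer combination $D=\sum_v D(v)(v)$ of vertices, $\deg D=\sum_v D(v)$. $D$ is $q$-reduced if $D(v)\ge 0$ for all $v\ne q$ and for every nonempty $A\subseteq V(G)\setminus\{q\}$ there is $v\in A$ such that $D(v)$ is less than the number of edges joining $v$ to vertices outside $A$. Linear equivalence: $D_1\sim D_2$ iff $D_2=D_1-\Delta(f)$ for some $f:V(G)\to\mathbb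 Z$, where $\Delta(f)=\sum_v\sum_{\{v,w\}\in E(G)}(f(v)-f(w))(v)$. *)

(* Defs.v *)
From HB Require Import structures.
From mathcomp Require Import all_boot all_order all_algebra.
Set Implicit Arguments. Unset Strict Implicit. Unset Printing Implicit Defensive.
Import Order.TTheory GRing.Theory Num.Theory.
Local Open Scope ring_scope.

(* A finite multigraph G: vertex type V, edge type E; each edge e joins
   src e and tgt e (an arbitrary reference orientation, used only to
   name the two oriented versions of e). *)
Section Graph.
Variables (V E : finType) (src tgt : E -> V).

Definition loopless : Prop := forall e : E, src e != tgt e.

Definition incident (v : V) (e : E) : bool := (src e == v) || (tgt e == v).

Definition other (v : V) (e : E) : V := if src e == v then tgt e else src e.

Definition adj : rel V :=
  fun v w => [exists e : E, ((src e == v) && (tgt e == w)) || ((src e == w) && (tgt e == v))].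
Definition connected_graph : Prop := forall v w : V, connect adj v w.

(* oriented edges: (e, true) goes src e -> tgt e, (e, false) is its opposite *)
Definition ohead (x : E * bool) : V := if x.2 then tgt x.1 else src x.1.
Definition otail (x : E * bool) : V := if x.2 then src x.1 else tgt x.1.

Definition indeg (P : {set E * bool}) (v : V) : nat :=
  #|[set x in P | ohead x == v]|.

Definition div_of (P : {set E * bool}) : V -> int :=
  fun v => (indeg P v)%:Z - 1.

Definition deg (D : V -> int) : int := \sum_(v : V) D v.

Definition darc (P : {set E * bool}) : rel V :=
  fun v w => [exists x in P, (otail x == v) && (ohead x == w)].
Definition dacyclic (P : {set E * bool}) : Prop :=
  forall v w : V, darc P v w -> ~~ connect (darc P) w v.

Definition oriented_kst (q : V) (k : nat) (T : {set E * bool}) : Prop :=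
  [/\ #|T| = (#|V| - 1 + k)%N,
      dacyclic T,
      indeg T q = 0%N &
      forall v : V, v != q -> (1 <= indeg T v)%N].

Definition out_edges (A : {set V}) (v : V) : nat :=
  #|[set e : E | incident v e && (other v e \notin A)]|.

Definition q_reduced (q : V) (D : V -> int) : Prop :=
  (forall v : V, v != q -> 0 <= D v) /\
  (forall A : {set V}, A != set0 -> q \notin A ->
     exists2 v, v \in A & D v < (out_edges A v)%:Z).

Definition laplacian (f : V -> int) : V -> int :=
  fun v => \sum_(e : E | incident v e) (f v - f (other v e)).

Definition lin_equiv (D1 D2 : V -> int) : Prop :=
  exists f : V -> int, forall v : V, D2 v = D1 v - laplacian f v.

End Graph.

(* Main.v *)
Require Import Defs.
From HB Require Import structures.
From mathcomp Require Import all_boot all_order all_algebra.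
From mathcomp Require Import zify.
Import Order.TTheory GRing.Theory Num.Theory.
Local Open Scope ring_scope.

Section Proofs.
Variables (V E : finType) (src tgt : E -> V).
Hypothesis hl : loopless src tgt.

Lemma other_ohead (x : E * bool) : other src tgt (Defs.ohead src tgt x) x.1 = otail src tgt x.
Proof.
case: x => e [] /=; rewrite /other /Defs.ohead /otail /=.
- by rewrite (negbTE (hl e)).
- by rewrite eqxx.
Qed.

Lemma incident_ohead x : incident src tgt (Defs.ohead src tgt x) x.1.
Proof. by case: x => e [] /=; rewrite /incident /Defs.ohead /= eqxx ?orbT. Qed.

Lemma ohead_inj x y : x.1 = y.1 -> Defs.ohead src tgt x = Defs.ohead src tgt y -> x = y.
Proof.
case: x => e b; case: y => e' b' /= <-; rewrite /Defs.ohead /=.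
by case: b; case: b' => //= H; move: (hl e); rewrite H eqxx.
Qed.

Lemma part1 q k T : oriented_kst src tgt q k T -> q_reduced src tgt q (div_of src tgt T).
Proof.
case=> _ hac _ hin; split.
  move=> v /hin; rewrite /div_of; lia.
move=> A A0 qA.
pose c := fun v => #|[set u in A | connect (darc src tgt T) u v]|.
have [v0 v0A] : exists v0, v0 \in A by case/set0Pn: A0 => x; exists x.
case: (arg_minnP c v0A) => v vA0 vmin.
have vA : v \in A := vA0.
exists v => //.
have src_out: forall x, x \in T -> Defs.ohead src tgt x = v -> otail src tgt x \notin A.
  move=> x xT hx; apply/negP => tA.
  have arc: darc src tgt T (otail src tgt x) v.
    by apply/existsP; exists x; rewrite xT hx !eqxx.
  have := vmin _ tA.
  have: [set u in A | connect (darc src tgt T) u (otail src tgt x)] \proper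
        [set u in A | connect (darc src tgt T) u v].
    apply/properP; split.
      apply/subsetP => u; rewrite !inE => /andP[uA uc]; rewrite uA /=.
      exact: connect_trans uc (connect1 arc).
    exists v; first by rewrite !inE vA connect0.
    by rewrite !inE vA /=; exact: (hac _ _ arc).
  move/proper_card; rewrite /c; lia.
have: (indeg src tgt T v <= out_edges src tgt A v)%N.
  rewrite /indeg /out_edges.
  rewrite -(card_in_imset (f := fst)).
    apply: subset_leq_card; apply/subsetP => e /imsetP [x /[!inE] /andP[xT /eqP hx] ->].
    rewrite -{1 2}hx incident_ohead other_ohead /=.
    exact: src_out.
  move=> x y; rewrite !inE => /andP[_ /eqP hx] /andP[_ /eqP hy] h.
  by apply: ohead_inj h _; rewrite hx hy.
rewrite /div_of; lia.
Qed.
Local Notation oh := (Defs.ohead src tgt).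
Local Notation ot := (otail src tgt).

Definition inv q (D : V -> int) (B : {set V}) (T : {set E * bool}) (r : V -> nat) :=
  [/\ q \in B,
      forall x, x \in T -> [/\ oh x \in B, ot x \in B, oh x != q & (r (ot x) < r (oh x))%N],
      forall v, v \in B -> (r v < #|B|)%N &
      forall v, v \in B -> v != q -> (indeg src tgt T v)%:Z = D v + 1].

Definition orin (v : V) (e : E) : E * bool := (e, tgt e == v).

Lemma orin_head v e : incident src tgt v e -> oh (orin v e) = v.
Proof.
rewrite /incident /orin /Defs.ohead /=.
by case: (tgt e =P v) => //= ne /orP[/eqP//|/eqP//].
Qed.

Lemma orin_tail v e : incident src tgt v e -> ot (orin v e) = other src tgt v e.
Proof.
rewrite /incident /orin /otail /other /=.
case: (tgt e =P v) => [<-|_] /=; first by rewrite (negbTE (hl e)).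
by move=> /orP[/eqP ->|//]; rewrite eqxx.
Qed.

Lemma choose_sub (T : finType) (O : {set T}) n : (n <= #|O|)%N ->
  exists S : {set T}, S \subset O /\ #|S| = n.
Proof.
move=> hn; exists [set x in take n (enum O)]; split.
  by apply/subsetP => x; rewrite inE => /mem_take; rewrite mem_enum.
rewrite cardsE (card_uniqP _); last by apply: take_uniq; apply: enum_uniq.
by rewrite size_take -cardE; case: ltngtP hn.
Qed.

Lemma step q D B T r : q_reduced src tgt q D -> inv q D B T r -> B != setT ->
  exists B' T' r', inv q D B' T' r' /\ (#|B| < #|B'|)%N.
Proof.
case=> Dnn Dred [qB hT hr hind] BT.
have A0 : ~: B != set0 by apply: contra BT; rewrite -setCT => /eqP/setC_inj ->.
have qA : q \notin ~: B by rewrite inE qB.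
have [v vA vlt] := Dred _ A0 qA.
have vB : v \notin B by move: vA; rewrite inE.
have vq : v != q by apply: contraNneq vB => ->.
have Dv := Dnn _ vq.
pose O := [set e | incident src tgt v e && (other src tgt v e \notin ~: B)].
have [S [SO cS]] : exists S : {set E}, S \subset O /\ #|S| = (`|D v|.+1)%N.
  apply: choose_sub; move: vlt; rewrite /out_edges -/O; lia.
pose N := [set orin v e | e in S].
have inN x : x \in N -> [/\ oh x = v & ot x \in B].
  case/imsetP => e eS ->; move/subsetP: SO => /(_ _ eS); rewrite inE => /andP[inc oth].
  by rewrite orin_head // orin_tail //; move: oth; rewrite inE negbK.
exists (v |: B), (T :|: N), (fun w => if w == v then #|B| else r w); split; last first.
  by rewrite cardsU1 vB.
split.
- by rewrite !inE qB orbT.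
- move=> x; rewrite inE => /orP[xT|xN].
    have [h1 h2 h3 h4] := hT _ xT.
    rewrite !inE h1 h2 !orbT h3; split => //.
    by rewrite (negbTE (memPn vB _ h1)) (negbTE (memPn vB _ h2)).
  have [h1 h2] := inN _ xN.
  rewrite !inE h1 h2 eqxx vq !orbT; split => //.
  by rewrite (negbTE (memPn vB _ h2)) hr.
- move=> w; rewrite cardsU1 vB !inE; case: eqP => //= _ /hr; lia.
- move=> w; rewrite !inE => /orP[/eqP ->|wB] wq.
    rewrite /indeg; have -> : [set x in T :|: N | oh x == v] = N.
      apply/setP => x; rewrite !inE; apply/andP/idP => [[/orP[xT|xN] /eqP hx]|xN].
        by have [h1 _ _ _] := hT _ xT; move: vB; rewrite -hx h1.
        by [].
      by rewrite xN orbT (inN _ xN).1 eqxx.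
    rewrite /N card_imset; last by move=> e1 e2 [].
    by rewrite cS; lia.
  have wv : w != v by apply: contraNneq vB => <-.
  rewrite -hind // /indeg; have -> : [set x in T :|: N | oh x == w] = [set x in T | oh x == w]; last by [].
  apply/setP => x; rewrite !inE; case: (boolP (x \in N)) => xN; rewrite ?orbT ?orbF //=.
  by rewrite (inN _ xN).1 eq_sym (negbTE wv) andbF.
Qed.

Lemma rank_acyclic (T : {set E * bool}) (r : V -> nat) :
  (forall x, x \in T -> (r (ot x) < r (oh x))%N) -> dacyclic src tgt T.
Proof.
move=> hr v w /existsP[x /and3P[xT /eqP tv /eqP hw]].
have mono : forall a b, connect (darc src tgt T) a b -> (r a <= r b)%N.
  move=> a b /connectP[p pth ->] {b}.
  elim: p a pth => //= c p IH a /andP[/existsP[y /and3P[yT /eqP ta /eqP hc]] pth].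
  apply: leq_trans (IH _ pth); rewrite -ta -hc; exact: ltnW (hr _ yT).
apply/negP => /mono; have := hr _ xT; rewrite tv hw; lia.
Qed.

Lemma grow q D : q_reduced src tgt q D -> forall m, (m <= #|V|)%N ->
  exists B T r, inv q D B T r /\ (m <= #|B|)%N.
Proof.
move=> hD; elim=> [_|m IH hm].
  exists [set q], set0, (fun _ => 0%N); split => //; split; first by rewrite inE.
  - by move=> x; rewrite in_set0.
  - by move=> v _; rewrite cards1.
  - by move=> v; rewrite inE => /eqP ->; rewrite eqxx.
have [B [T [r [hi hB]]]] := IH (ltnW hm).
case: (ltnP m #|B|) => hmB; first by exists B, T, r.
have BT : B != setT.
  apply: contraTneq hm => Beq; move: hmB; rewrite Beq cardsT; lia.
have [B' [T' [r' [hi' hB']]]] := step q D B T r hD hi BT.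
exists B', T', r'; split => //; lia.
Qed.

Lemma part2 q k D : q_reduced src tgt q D -> D q = -1 -> deg D = k%:Z - 1 ->
  exists T, oriented_kst src tgt q k T /\ lin_equiv src tgt (div_of src tgt T) D.
Proof.
move=> hD Dq degD.
have [B [T [r [[qB hT hr hind] hB]]]] := grow q D hD #|V| (leqnn #|V|).
have BT : forall v, v \in B.
  move=> v; have /eqP -> : B == setT by rewrite eqEcard subsetT cardsT hB.
  by rewrite inE.
have indq : indeg src tgt T q = 0%N.
  apply/eqP; rewrite cards_eq0; apply/eqP/setP => x; rewrite !inE.
  case: (boolP (x \in T)) => //= xT; have [_ _ h _] := hT _ xT; exact: negbTE h.
have hdiv : forall v, div_of src tgt T v = D v.
  move=> v; rewrite /div_of; case: (eqVneq v q) => [->|vq]; first by rewrite indq Dq.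
  by rewrite hind ?BT // addrK.
exists T; split; last first.
  exists (fun _ => 0) => v; rewrite hdiv /laplacian big1 ?subr0 // => e _.
have cardT : #|T| = (\sum_v indeg src tgt T v)%N.
  rewrite -sum1_card (partition_big (Defs.ohead src tgt) predT) //=.
  apply: eq_bigr => v _; rewrite /indeg -sum1_card; apply: eq_bigl => x; rewrite inE.
  by [].
have sumZ : \sum_v ((indeg src tgt T v)%:Z) = ((\sum_v indeg src tgt T v)%N)%:Z.
  by rewrite -[RHS]intz sumMz; apply: eq_bigr => v _; rewrite intz.
have hdeg : (#|T|)%:Z = k%:Z - 1 + (#|V|)%:Z.
  rewrite -degD /deg -(eq_bigr _ (fun v _ => hdiv v)) /div_of sumrB sumZ -cardT.
  have s1 : \sum_(i : V) (1:int) = #|V|%:Z by rewrite sumr_const natz.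
  by rewrite s1 subrK.
have V0 : (0 < #|V|)%N by apply/card_gt0P; exists q.
split.
- lia.
- by apply: (@rank_acyclic T r) => x /hT [].
- exact: indq.
- move=> v vq; have := hind _ (BT v) vq; have := hD.1 _ vq; lia.
Qed.
End Proofs.

Theorem mainTheorem2 (V E : finType) (src tgt : E -> V) (q : V) (k : nat) :
  loopless src tgt -> connected_graph src tgt ->
  (forall T : {set E * bool}, oriented_kst src tgt q k T ->
     q_reduced src tgt q (div_of src tgt T))
  /\
  (forall D : V -> int, q_reduced src tgt q D -> D q = -1 -> deg D = k%:Z - 1 ->
     exists T : {set E * bool},
       oriented_kst src tgt q k T /\ lin_equiv src tgt (div_of src tgt T) D).
Proof.
move=> hl _; split.
- by move=> T; apply: part1.
- by move=> D; apply: part2.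
Qed.
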